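(* For any finite group $G$, with $H=A\oplus B$, the bilinear form $(\cdot,\cdot)$ and the involution $x\mapsto x^*$ defined below, there exists $U\in A$ such that $\mathcal H(G)=(H=A\oplus B,(\cdot,\cdot),x\mapsto x^*,U)$ is a structure algebra.
   Context: Construction: $\mathbb C[G]$ is the group algebra, $A$ its center with basis $E_\alpha=\sum_{g\in\alpha}g$ ($\alpha$ conjugacy classes). $M(G)=\operatorname{End}(\mathbb C[G])$ with matrix units $E_{g_1,g_2}$ ($E_{g_1,g_2}(h)=\delta_{g_2,h}g_1$). For each conjugacy class $\beta$ (under simultaneous conjugation) of ordered pairs $(s_1,s_2)$ with $s_1^2=s_2^2=1$ put $E_\beta=\sum_{(s',s'')\in\beta}E_{s',s''}$; $B$ is their span. $V(g)(x)=gxg^{-1}$ extends to $V:\mathbb C[G]\to M(G)$, $V_\alpha=V(E_\alpha)$. The multiplication on $H=A\oplus B$ is that of $A$ and of $B$ plus $E_\alpha E_\beta=V_\alpha E_\beta$, $E_\beta E_\alpha=E_\beta V_\alpha$. The involution $*$ is the linear extension of $g\mapsto g^{-1}$ on $A$ and matrix transposition on $B$ (so $E_\beta^*=E_{\beta^*}$, $\beta^*$ the class of $(s_2,s_1)$). The form is $(x,y)=f(xy)$ with $f$ linear, $f(E_\alpha)=\frac{1}{|G|}\delta_{\alpha,\{1\}}$, $f(E_\beta)=\frac1{|G|}\operatorname{tr}(E_\beta)$. Structure algebra: a tuple $(H=A\oplus B,(\cdot,\cdot),*,U)$ with $H$ finite-dimensional associative over $\mathbb C$, $(\cdot,\cdot)$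 symmetric invariant ($(xy,z)=(x,yz)$), $*$ an involutive antiautomorphism, $U\in A$, such that: (1) $A$ is a subalgebra in the center of $H$ whose unit is that of $H$; (2) $B$ is a two-sided ideal with a unit; (3) $(\cdot,\cdot)|_A,(\cdot,\cdot)|_B$ nondegenerate; (4) $(V_{K_B}(b_1),b_2)=\sum F^{ij}(f_i,b_1)(f_j,b_2)$ for $b_1,b_2\in B$, where $(f_i)$ is a basis of $A$ with inverse Gram matrix $F^{ij}$ and $V_{K_B}(x)=\sum G^{kl}g_kxg_l$ for a basis $(g_k)$ of $B$ with inverse Gram matrix $G^{kl}$; (5) $A^*=A$, $B^*=B$, $(x^*,y^* )=(x,y)$; (6) $U^2=K_{A,*}$; (7) $(U,b)=(K_{B,*},b)$ for $b\in B$; (8) $(aU)^*=aU$ for $a\in A$; here $K_{X,*}=\sum F^{ij}f_if_j^*$ computed in $X=A$ or $B$. *)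

(* Defs.v *)
From HB Require Import structures.
From mathcomp Require Import all_boot all_order all_fingroup all_algebra.
Set Implicit Arguments. Unset Strict Implicit. Unset Printing Implicit Defensive.
Import Order.TTheory GRing.Theory Num.Theory.
Local Open Scope ring_scope.

(* The algebra H is modelled as a subspace H of an ambient finite-           *)
(* dimensional C-vector space V, with a multiplication mul : V -> V -> V     *)
(* whose restriction to H makes H an associative unital algebra.             *)
Section StructureAlgebra.
Variables (C : fieldType) (V : vectType C).

Definition gram_mx (d : nat) (form : V -> V -> C) (f : d.-tuple V) : 'M[C]_d :=
  \matrix_(i < d, j < d) form (tnth f i) (tnth f j).

Definition Kstar (mul : V -> V -> V) (form : V -> V -> C) (star : V -> V)
    (X : {vspace V}) : V :=
  let f := vbasis X in
  let F := invmx (gram_mx form f) in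
  \sum_(i < \dim X) \sum_(j < \dim X) F i j *: mul (tnth f i) (star (tnth f j)).

Definition VK (mul : V -> V -> V) (form : V -> V -> C) (X : {vspace V}) (x : V) : V :=
  let g := vbasis X in
  let G := invmx (gram_mx form g) in
  \sum_(k < \dim X) \sum_(l < \dim X) G k l *: mul (mul (tnth g k) x) (tnth g l).

Record structure_algebra (mul : V -> V -> V) (H A B : {vspace V})
    (form : V -> V -> C) (star : V -> V) (U : V) : Prop := {
  sa_dsum : (A + B)%VS = H /\ directv (A + B);
  sa_mul_closed : forall x y, x \in H -> y \in H -> mul x y \in H;
  sa_mul_linl : forall c x y z, x \in H -> y \in H -> z \in H ->
      mul (c *: x + y) z = c *: mul x z + mul y z;
  sa_mul_linr : forall c x y z, x \in H -> y \in H -> z \in H ->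
      mul z (c *: x + y) = c *: mul z x + mul z y;
  sa_mul_assoc : forall x y z, x \in H -> y \in H -> z \in H ->
      mul x (mul y z) = mul (mul x y) z;
  sa_A_subalg : forall x y, x \in A -> y \in A -> mul x y \in A;
  sa_A_central : forall a x, a \in A -> x \in H -> mul a x = mul x a;
  sa_unit : exists2 e, e \in A & forall x, x \in H -> mul e x = x /\ mul x e = x;
  sa_B_ideal : forall b x, b \in B -> x \in H -> mul x b \in B /\ mul b x \in B;
  sa_B_unit : exists2 e, e \in B & forall b, b \in B -> mul e b = b /\ mul b e = b;
  sa_form_linl : forall c x y z, x \in H -> y \in H -> z \in H ->
      form (c *: x + y) z = c * form x z + form y z;
  sa_form_sym : forall x y, x \in H -> y \in H -> form x y = form y x;
  sa_form_inv : forall x y z, x \in H -> y \in H -> z \in H ->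
      form (mul x y) z = form x (mul y z);
  sa_A_nondeg : forall a, a \in A -> (forall a', a' \in A -> form a a' = 0) -> a = 0;
  sa_B_nondeg : forall b, b \in B -> (forall b', b' \in B -> form b b' = 0) -> b = 0;
  sa_star_H : forall x, x \in H -> star x \in H;
  sa_star_lin : forall c x y, x \in H -> y \in H -> star (c *: x + y) = c *: star x + star y;
  sa_star_anti : forall x y, x \in H -> y \in H -> star (mul x y) = mul (star y) (star x);
  sa_star_invol : forall x, x \in H -> star (star x) = x;
  sa_cond4 : forall b1 b2, b1 \in B -> b2 \in B ->
      form (VK mul form B b1) b2 =
      (let f := vbasis A in let F := invmx (gram_mx form f) in
       \sum_(i < \dim A) \sum_(j < \dim A)
          F i j * form (tnth f i) b1 * form (tnth f j) b2);
  sa_star_A : forall x, x \in H -> (star x \in A) = (x \in A);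
  sa_star_B : forall x, x \in H -> (star x \in B) = (x \in B);
  sa_star_form : forall x y, x \in H -> y \in H -> form (star x) (star y) = form x y;
  sa_U_A : U \in A;
  sa_U_sq : mul U U = Kstar mul form star A;
  sa_U_form : forall b, b \in B -> form U b = form (Kstar mul form star B) b;
  sa_U_star : forall a, a \in A -> star (mul a U) = mul a U
}.

End StructureAlgebra.

(* C[G] = functions gT -> C (coefficient vectors); M(G) = End(C[G]) =        *)
(* functions gT * gT -> C, the entry at (g1,g2) being the coefficient of     *)
(* the matrix unit E_{g1,g2}. The ambient space is C[G] x M(G).              *)
Section HG.
Variables (C : numClosedFieldType) (gT : finGroupType).

Definition CG := {ffun gT -> C^o}.
Definition MG := {ffun (gT * gT)%type -> C^o}.
Definition HGamb := (CG * MG)%type.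

Definition cg_mul (a b : CG) : CG :=
  [ffun g => \sum_(h : gT) a h * b (h^-1 * g)%g].

Definition mg_mul (m n : MG) : MG :=
  [ffun p : gT * gT => \sum_(h : gT) m (p.1, h) * n (h, p.2)].

(* V(g) = sum_x E_{g x g^-1, x}, extended linearly: V(a) = sum_g a_g V(g).
   (In MathComp x ^ g^-1 = g * x * g^-1.) *)
Definition Vmap (a : CG) : MG :=
  [ffun p : gT * gT => \sum_(g : gT) a g * (p.1 == (p.2 ^ g^-1)%g)%:R].

Definition Eclass (x : gT) : CG := [ffun g => (g \in (x ^: [set: gT])%g)%:R].

Definition Epair (s1 s2 : gT) : MG :=
  [ffun p : gT * gT => [exists g : gT, (p.1 == (s1 ^ g)%g) && (p.2 == (s2 ^ g)%g)]%:R].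

Definition involutive_pair (p : gT * gT) : bool :=
  ((p.1 * p.1)%g == 1%g) && ((p.2 * p.2)%g == 1%g).

Definition HG_A : {vspace HGamb} :=
  <<[seq ((Eclass x, 0%R) : HGamb) | x <- enum gT]>>%VS.

Definition HG_B : {vspace HGamb} :=
  <<[seq ((0%R, Epair p.1 p.2) : HGamb) | p <- enum [pred p : gT * gT | involutive_pair p]]>>%VS.

Definition HG_H : {vspace HGamb} := (HG_A + HG_B)%VS.

(* multiplication: that of A, of B, and E_alpha E_beta = V_alpha E_beta,
   E_beta E_alpha = E_beta V_alpha, extended bilinearly *)
Definition HG_mul (x y : HGamb) : HGamb :=
  (cg_mul x.1 y.1, mg_mul x.2 y.2 + mg_mul (Vmap x.1) y.2 + mg_mul x.2 (Vmap y.1)).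

Definition HG_f (x : HGamb) : C :=
  (x.1 1%g + \sum_(g : gT) x.2 (g, g)) / (#|gT|%:R).

Definition HG_form (x y : HGamb) : C := HG_f (HG_mul x y).

Definition HG_star (x : HGamb) : HGamb :=
  ([ffun g => x.1 (g^-1)%g], [ffun p : gT * gT => x.2 (p.2, p.1)]).

End HG.

(* Main.v *)
Require Import Defs.
From HB Require Import structures.
From mathcomp Require Import all_boot all_order all_fingroup all_algebra.
From mathcomp Require Import ring.
Set Implicit Arguments. Unset Strict Implicit. Unset Printing Implicit Defensive.
Import Order.TTheory GRing.Theory Num.Theory.
Local Open Scope ring_scope.

Section Frame.
Variables (C : fieldType) (V : vectType C).

Lemma lin_sumE (W : lmodType C) (h : V -> W) :
  (forall c x y, h (c *: x + y) = c *: h x + h y) ->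
  forall (I : Type) (r : seq I) (P : pred I) (a : I -> C) (x : I -> V),
  h (\sum_(i <- r | P i) a i *: x i) = \sum_(i <- r | P i) a i *: h (x i).
Proof.
move=> hl I r P a x.
have h0 : h 0 = 0.
  have := hl 1 0 0; rewrite !scale1r addr0 => e.
  by apply/(addrI (h 0)); rewrite addr0 -e.
elim/big_rec2: _ => [//|i y1 y2 _ <-]; by rewrite hl.
Qed.

Lemma frame_sum (W : lmodType C) (form : V -> V -> C) (X : {vspace V})
  (K : finType) (u w : K -> V) (phi : V -> V -> W) :
  (forall c x y z, form (c *: x + y) z = c * form x z + form y z) ->
  (forall x y, x \in X -> y \in X -> form x y = form y x) ->
  (forall k, u k \in X) -> (forall k, w k \in X) ->
  (forall x, x \in X -> x = \sum_k form x (w k) *: u k) ->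
  (forall c x y z, phi (c *: x + y) z = c *: phi x z + phi y z) ->
  (forall c x y z, phi z (c *: x + y) = c *: phi z x + phi z y) ->
  \sum_(i < \dim X) \sum_(j < \dim X)
     invmx (gram_mx form (vbasis X)) i j *: phi (tnth (vbasis X) i) (tnth (vbasis X) j)
  = \sum_k phi (u k) (w k).
Proof.
move=> fl fsym uX wX frame pl pr.
set n := \dim X; set f := vbasis X.
have fX i : tnth f i \in X by apply: vbasis_mem; apply: mem_tnth.
have ffree : free f by apply: basis_free (vbasisP X).
pose a k m := coord f m (u k).
pose c k l := coord f l (w k).
have ue k : u k = \sum_(m < n) a k m *: tnth f m.
  by rewrite {1}(coord_vbasis (uX k)); apply: eq_bigr => m _; rewrite (tnth_nth 0).
have we k : w k = \sum_(m < n) c k m *: tnth f m.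
  by rewrite {1}(coord_vbasis (wX k)); apply: eq_bigr => m _; rewrite (tnth_nth 0).
pose M : 'M[C]_n := \matrix_(l, m) \sum_k c k l * a k m.
have fsum (I : finType) (al : I -> C) (x : I -> V) y :
    form (\sum_i al i *: x i) y = \sum_i al i * form (x i) y.
  elim/big_rec2: _ => [|i y1 y2 _ <-]; last by rewrite fl.
  have := fl 1 0 0 y; rewrite !scale1r mul1r addr0 => e.
  by apply/(addrI (form 0 y)); rewrite addr0 -e.
have GM : gram_mx form f *m M = 1%:M.
  apply/matrixP => i m; rewrite !mxE.
  rewrite -(coord_free i m ffree) -(tnth_nth 0) [in RHS](frame _ (fX i)) linear_sum /=.
  under eq_bigr do rewrite !mxE big_distrr.
  rewrite exchange_big /=; apply: eq_bigr => k _.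
  rewrite linearZ /= -/(a k m) fsym ?wX ?fX // {1}we fsum big_distrl /=.
  by apply: eq_bigr => l _; rewrite fsym ?fX // mulrCA mulrA.
have Mu : invmx (gram_mx form f) = M.
  have [Gu _] := mulmx1_unit GM.
  by rewrite -[invmx _]mulmx1 -GM mulmxA mulVmx ?mul1mx.
have Msym : M^T = M.
  rewrite -Mu trmx_inv; congr invmx; apply/matrixP => i j.
  by rewrite !mxE fsym.
have sL (I : finType) (al : I -> C) (x : I -> V) z :
    phi (\sum_i al i *: x i) z = \sum_i al i *: phi (x i) z.
  exact: (@lin_sumE W (fun x => phi x z) (fun c0 x y => pl c0 x y z)).
have sR (I : finType) (al : I -> C) (x : I -> V) z :
    phi z (\sum_i al i *: x i) = \sum_i al i *: phi z (x i).
  exact: (@lin_sumE W (phi z) (fun c0 x y => pr c0 x y z)).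
rewrite Mu.
transitivity (\sum_k \sum_i \sum_j (c k j * a k i) *: phi (tnth f i) (tnth f j)).
  rewrite [RHS]exchange_big; apply: eq_bigr => i _; rewrite [RHS]exchange_big.
  apply: eq_bigr => j _; rewrite -{1}Msym !mxE scaler_suml //.
apply: eq_bigr => k _; rewrite (ue k) sL; apply: eq_bigr => i _.
rewrite (we k) sR scaler_sumr; apply: eq_bigr => j _.
by rewrite scalerA mulrC.
Qed.
End Frame.

Section HG1.
Variables (C : numClosedFieldType) (gT : finGroupType).
Local Notation CG := (CG C gT).
Local Notation MG := (MG C gT).
Local Notation HGamb := (HGamb C gT).
Implicit Types (a b : CG) (m n : MG).

Lemma scE (c : C) (x : C^o) : c *: x = c * x. Proof. by []. Qed.

Lemma sum1l (T : finType) (t : T) (F : T -> C) :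
  \sum_p (p == t)%:R * F p = F t.
Proof.
rewrite (bigD1 t) //= eqxx mul1r big1 ?addr0 // => p /negPf ->.
by rewrite mul0r.
Qed.

Lemma sum1r (T : finType) (t : T) (F : T -> C) :
  \sum_p F p * (p == t)%:R = F t.
Proof. by under eq_bigr do rewrite mulrC; apply: sum1l. Qed.

Lemma cg_mul_linl c a a' b : cg_mul (c *: a + a') b = c *: cg_mul a b + cg_mul a' b.
Proof.
apply/ffunP => g; rewrite !ffunE; under eq_bigr do rewrite !ffunE.
rewrite scE mulr_sumr -big_split /=; apply: eq_bigr => h _; rewrite scE; ring.
Qed.

Lemma cg_mul_linr c a a' b : cg_mul b (c *: a + a') = c *: cg_mul b a + cg_mul b a'.
Proof.
apply/ffunP => g; rewrite !ffunE; under eq_bigr do rewrite !ffunE.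
rewrite scE mulr_sumr -big_split /=; apply: eq_bigr => h _; rewrite scE; ring.
Qed.

Lemma mg_mul_linl c m m' n : mg_mul (c *: m + m') n = c *: mg_mul m n + mg_mul m' n.
Proof.
apply/ffunP => g; rewrite !ffunE; under eq_bigr do rewrite !ffunE.
rewrite scE mulr_sumr -big_split /=; apply: eq_bigr => h _; rewrite scE; ring.
Qed.

Lemma mg_mul_linr c m m' n : mg_mul n (c *: m + m') = c *: mg_mul n m + mg_mul n m'.
Proof.
apply/ffunP => g; rewrite !ffunE; under eq_bigr do rewrite !ffunE.
rewrite scE mulr_sumr -big_split /=; apply: eq_bigr => h _; rewrite scE; ring.
Qed.

Lemma Vmap_lin c a a' : Vmap (c *: a + a') = c *: Vmap a + Vmap a'.
Proof.
apply/ffunP => g; rewrite !ffunE; under eq_bigr do rewrite !ffunE.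
rewrite scE mulr_sumr -big_split /=; apply: eq_bigr => h _; rewrite scE; ring.
Qed.

Lemma cg_mul0l b : cg_mul 0 b = 0.
Proof. by apply/ffunP => g; rewrite !ffunE big1 // => h _; rewrite ffunE mul0r. Qed.
Lemma cg_mul0r b : cg_mul b 0 = 0.
Proof. by apply/ffunP => g; rewrite !ffunE big1 // => h _; rewrite ffunE mulr0. Qed.
Lemma mg_mul0l m : mg_mul 0 m = 0.
Proof. by apply/ffunP => g; rewrite !ffunE big1 // => h _; rewrite ffunE mul0r. Qed.
Lemma mg_mul0r m : mg_mul m 0 = 0.
Proof. by apply/ffunP => g; rewrite !ffunE big1 // => h _; rewrite ffunE mulr0. Qed.
Lemma Vmap0 : Vmap 0 = 0 :> MG.
Proof. by apply/ffunP => g; rewrite !ffunE big1 // => h _; rewrite ffunE mul0r. Qed.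

Lemma eq_conjV (p h g : gT) : (p == (h ^ g^-1)%g) = (h == (p ^ g)%g).
Proof. by rewrite eq_sym (canF_eq (conjgKV g)). Qed.

Lemma VmapL m a :
  mg_mul (Vmap a) m = [ffun pq => \sum_g a g * m ((pq.1 ^ g)%g, pq.2)].
Proof.
apply/ffunP => -[p q]; rewrite !ffunE /=.
under eq_bigr do rewrite ffunE /= big_distrl.
rewrite exchange_big; apply: eq_bigr => g _ /=.
under eq_bigr do rewrite eq_conjV -mulrA.
by rewrite -mulr_sumr sum1l.
Qed.

Lemma VmapR m a :
  mg_mul m (Vmap a) = [ffun pq => \sum_g a g * m (pq.1, (pq.2 ^ g^-1)%g)].
Proof.
apply/ffunP => -[p q]; rewrite !ffunE /=.
under eq_bigr do rewrite ffunE /= big_distrr.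
rewrite exchange_big; apply: eq_bigr => g _ /=.
under eq_bigr do rewrite mulrCA.
rewrite -mulr_sumr; congr (_ * _).
under eq_bigr do rewrite mulrC.
by rewrite sum1l.
Qed.

Lemma Vmap_mul a b : Vmap (cg_mul a b) = mg_mul (Vmap a) (Vmap b).
Proof.
rewrite VmapL; apply/ffunP => -[p q]; rewrite !ffunE /=.
under eq_bigr do rewrite ffunE big_distrl.
rewrite exchange_big; apply: eq_bigr => h _ /=.
rewrite ffunE /= mulr_sumr (reindex_inj (mulgI h)) /=.
apply: eq_bigr => k _.
rewrite mulKg invMg conjgM [in LHS]eq_conjV [in LHS]eq_sym; ring.
Qed.

Lemma cg_mul_assoc a b c : cg_mul a (cg_mul b c) = cg_mul (cg_mul a b) c.
Proof.
apply/ffunP => g; rewrite !ffunE.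
under [RHS]eq_bigr do rewrite ffunE big_distrl.
rewrite [RHS]exchange_big; apply: eq_bigr => h _ /=.
rewrite ffunE mulr_sumr [RHS](reindex_inj (mulgI h)) /=.
apply: eq_bigr => k _; rewrite mulKg invMg !mulgA; ring.
Qed.

Lemma mg_mul_assoc m n o : mg_mul m (mg_mul n o) = mg_mul (mg_mul m n) o.
Proof.
apply/ffunP => -[p q]; rewrite !ffunE /=.
under eq_bigr do rewrite ffunE big_distrr.
under [RHS]eq_bigr do rewrite ffunE big_distrl.
rewrite [RHS]exchange_big; apply: eq_bigr => h _ /=.
apply: eq_bigr => k _ /=; ring.
Qed.

Definition mtr m : C := \sum_g m (g, g).

Lemma mtr_comm m n : mtr (mg_mul m n) = mtr (mg_mul n m).
Proof.
rewrite /mtr; under eq_bigr do rewrite ffunE.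
under [RHS]eq_bigr do rewrite ffunE.
rewrite [RHS]exchange_big; apply: eq_bigr => g _; apply: eq_bigr => h _ /=.
by rewrite mulrC.
Qed.

Lemma mtr_lin c m n : mtr (c *: m + n) = c * mtr m + mtr n.
Proof.
rewrite /mtr mulr_sumr -big_split; apply: eq_bigr => g _; by rewrite !ffunE.
Qed.

End HG1.

Section HG2.
Variables (C : numClosedFieldType) (gT : finGroupType).
Local Notation CG := (CG C gT).
Local Notation MG := (MG C gT).
Local Notation HGamb := (HGamb C gT).
Local Notation N := (#|gT|%:R : C).
Implicit Types (a b : CG) (m n : MG) (x y z : HGamb).

Lemma addE m n pq : (m + n) pq = m pq + n pq. Proof. by rewrite ffunE. Qed.
Lemma addcE a b g : (a + b) g = a g + b g. Proof. by rewrite ffunE. Qed.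
Lemma sclE c m pq : (c *: m) pq = c * m pq. Proof. by rewrite ffunE. Qed.
Lemma sclcE c a g : (c *: a) g = c * a g. Proof. by rewrite ffunE. Qed.

Lemma mg_mulDl m m' n : mg_mul (m + m') n = mg_mul m n + mg_mul m' n.
Proof. by have := mg_mul_linl 1 m m' n; rewrite !scale1r. Qed.
Lemma mg_mulDr m m' n : mg_mul n (m + m') = mg_mul n m + mg_mul n m'.
Proof. by have := mg_mul_linr 1 m m' n; rewrite !scale1r. Qed.
Lemma VmapD a a' : Vmap (a + a') = Vmap a + Vmap a'.
Proof. by have := Vmap_lin 1 a a'; rewrite !scale1r. Qed.

Lemma HG_mul_linl c x x' y :
  HG_mul (c *: x + x') y = c *: HG_mul x y + HG_mul x' y.
Proof.
case: x x' y => [x1 x2] [x1' x2'] [y1 y2]; rewrite /HG_mul /=.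
congr pair; first exact: cg_mul_linl.
rewrite Vmap_lin !mg_mul_linl.
apply/ffunP => pq; rewrite !(addE, sclE); ring.
Qed.

Lemma HG_mul_linr c x x' y :
  HG_mul y (c *: x + x') = c *: HG_mul y x + HG_mul y x'.
Proof.
case: x x' y => [x1 x2] [x1' x2'] [y1 y2]; rewrite /HG_mul /=.
congr pair; first exact: cg_mul_linr.
rewrite Vmap_lin !mg_mul_linr.
apply/ffunP => pq; rewrite !(addE, sclE); ring.
Qed.

Lemma HG_mul_assoc x y z : HG_mul x (HG_mul y z) = HG_mul (HG_mul x y) z.
Proof.
case: x y z => [x1 x2] [y1 y2] [z1 z2]; rewrite /HG_mul /=.
congr pair; first exact: cg_mul_assoc.
rewrite !Vmap_mul !(mg_mulDl, mg_mulDr) !mg_mul_assoc.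
apply/ffunP => pq; rewrite !addE; ring.
Qed.

Lemma HG_fE x : HG_f x = (x.1 1%g + mtr x.2) / N.
Proof. by []. Qed.

Lemma HG_f_lin c x y : HG_f (c *: x + y) = c * HG_f x + HG_f y.
Proof.
rewrite !HG_fE /= mtr_lin !ffunE scE; ring.
Qed.

Lemma mtrD m n : mtr (m + n) = mtr m + mtr n.
Proof. by have := mtr_lin 1 m n; rewrite scale1r mul1r. Qed.

Lemma HG_form_linl c x y z :
  HG_form (c *: x + y) z = c * HG_form x z + HG_form y z.
Proof. by rewrite /HG_form HG_mul_linl HG_f_lin. Qed.

Lemma HG_form_linr c x y z :
  HG_form z (c *: x + y) = c * HG_form z x + HG_form z y.
Proof. by rewrite /HG_form HG_mul_linr HG_f_lin. Qed.

Lemma HG_form_sym x y : HG_form x y = HG_form y x.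
Proof.
case: x y => [x1 x2] [y1 y2]; rewrite /HG_form !HG_fE /= !mtrD.
rewrite (mtr_comm x2) (mtr_comm (Vmap x1)) (mtr_comm x2 (Vmap y1)).
congr (_ / _); rewrite !ffunE.
rewrite (reindex_inj invg_inj) /=.
under eq_bigr do rewrite invgK mulg1.
under [in RHS]eq_bigr do rewrite mulg1.
under eq_bigr do rewrite mulrC.
ring.
Qed.

Lemma HG_form_inv x y z : HG_form (HG_mul x y) z = HG_form x (HG_mul y z).
Proof. by rewrite /HG_form HG_mul_assoc. Qed.

Definition inva a : CG := [ffun g => a (g^-1)%g].
Definition trm m : MG := [ffun p => m (p.2, p.1)].

Lemma HG_starE x : HG_star x = (inva x.1, trm x.2). Proof. by []. Qed.

Lemma inva_mul a b : inva (cg_mul a b) = cg_mul (inva b) (inva a).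
Proof.
apply/ffunP => g; rewrite !ffunE.
rewrite [RHS](reindex_inj (mulgI g)) /=; apply: eq_bigr => k _.
by rewrite !ffunE invMg -mulgA mulVg mulg1 invgK mulrC.
Qed.

Lemma trm_mul m n : trm (mg_mul m n) = mg_mul (trm n) (trm m).
Proof.
apply/ffunP => -[p q]; rewrite !ffunE /=; apply: eq_bigr => h _.
by rewrite !ffunE mulrC.
Qed.

Lemma trm_Vmap a : trm (Vmap a) = Vmap (inva a).
Proof.
apply/ffunP => -[p q]; rewrite !ffunE /=.
rewrite [RHS](reindex_inj invg_inj) /=; apply: eq_bigr => g _.
by rewrite !ffunE invgK eq_conjV.
Qed.

Lemma trmD m n : trm (m + n) = trm m + trm n.
Proof. by apply/ffunP => pq; rewrite !ffunE. Qed.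

Lemma HG_star_lin c x y : HG_star (c *: x + y) = c *: HG_star x + HG_star y.
Proof.
rewrite !HG_starE /=; congr pair; apply/ffunP => g; rewrite !ffunE //.
Qed.

Lemma HG_star_invol x : HG_star (HG_star x) = x.
Proof.
case: x => x1 x2; rewrite !HG_starE /=; congr pair; apply/ffunP => g;
  rewrite !ffunE ?invgK //; by case: g.
Qed.

Lemma HG_star_anti x y : HG_star (HG_mul x y) = HG_mul (HG_star y) (HG_star x).
Proof.
case: x y => [x1 x2] [y1 y2]; rewrite /HG_mul !HG_starE /=.
congr pair; first exact: inva_mul.
rewrite !trmD !trm_mul !trm_Vmap.
apply/ffunP => pq; rewrite !addE; ring.
Qed.

Lemma HG_f_star x : HG_f (HG_star x) = HG_f x.
Proof.
rewrite !HG_fE HG_starE /= ffunE invg1; congr ((_ + _) / _).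
by apply: eq_bigr => g _; rewrite ffunE.
Qed.

Lemma HG_form_star x y : HG_form (HG_star x) (HG_star y) = HG_form x y.
Proof.
by rewrite /HG_form -HG_star_anti HG_f_star -/(HG_form y x) HG_form_sym.
Qed.

End HG2.

Lemma span_ind (K : fieldType) (V : vectType K) (P : V -> Prop) (s : seq V) :
  P 0 -> (forall x y, P x -> P y -> P (x + y)) -> (forall k x, P x -> P (k *: x)) ->
  (forall u, u \in s -> P u) -> forall x, x \in <<s>>%VS -> P x.
Proof.
move=> P0 PD PZ Ps x; rewrite span_def big_seq.
pose Q (U : {vspace V}) := forall x, x \in U -> P x.
suff : Q (\sum_(i <- s | i \in s) <[i]>)%VS by apply.
apply: (big_ind Q).
- by move=> y; rewrite memv0 => /eqP ->.
- move=> U W QU QW y /memv_addP [u uU [w wW ->]]; exact: PD (QU _ uU) (QW _ wW).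
- by move=> u us y /vlineP [k ->]; apply: PZ; apply: Ps.
Qed.

Section HG3.
Variables (C : numClosedFieldType) (gT : finGroupType).
Local Notation CG := (CG C gT).
Local Notation MG := (MG C gT).
Local Notation HGamb := (HGamb C gT).
Local Notation N := (#|gT|%:R : C).
Implicit Types (a b : CG) (m n : MG).

Lemma Nneq0 : N != 0.
Proof.
rewrite pnatr_eq0 -lt0n; apply/card_gt0P; by exists 1%g.
Qed.

Lemma pairZ (c : C) (a : CG) (m : MG) : c *: ((a, m) : HGamb) = (c *: a, c *: m).
Proof. by []. Qed.
Lemma pairD (a a' : CG) (m m' : MG) : ((a, m) : HGamb) + (a', m') = (a + a', m + m').
Proof. by []. Qed.

Definition classf a := forall g y : gT, a (g ^ y)%g = a g.
Definition invMx m := forall p q y : gT, m ((p ^ y)%g, (q ^ y)%g) = m (p, q).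
Definition suppm m := forall p q : gT, ~~ involutive_pair (p, q) -> m (p, q) = 0.
Definition iotp (s t : gT) : C := (involutive_pair (s, t))%:R.

Lemma invpJ (p q y : gT) : involutive_pair ((p ^ y)%g, (q ^ y)%g) = involutive_pair (p, q).
Proof. by rewrite /involutive_pair /= -!conjMg !conjg_eq1. Qed.

Lemma iotaJ (s t y : gT) : iotp (s ^ y)%g (t ^ y)%g = iotp s t.
Proof. by rewrite /iotp invpJ. Qed.

Lemma iotaC (s t : gT) : iotp t s = iotp s t.
Proof. by rewrite /iotp /involutive_pair /= andbC. Qed.

Lemma iota_supp m (s t : gT) : suppm m -> iotp s t * m (s, t) = m (s, t).
Proof.
rewrite /iotp; case: (boolP (involutive_pair (s, t))) => [_|H] Hm.
  by rewrite mul1r.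
by rewrite Hm // mulr0.
Qed.

Lemma eqJ (p y X : gT) : ((p ^ y)%g == X) = (p == (X ^ y^-1)%g).
Proof. exact: (canF_eq (conjgK y)). Qed.

Lemma inclassP (h g : gT) : reflect (exists z, h = (g ^ z)%g) (h \in (g ^: [set: gT])%g).
Proof.
apply: (iffP imsetP) => [[z _ ->]|[z ->]]; first by exists z.
by exists z; rewrite ?in_setT.
Qed.

Lemma fst_sum (I : Type) (r : seq I) (P : pred I) (F : I -> HGamb) :
  (\sum_(i <- r | P i) F i).1 = \sum_(i <- r | P i) (F i).1.
Proof. by rewrite (big_morph fst (id1 := 0) (op1 := +%R)). Qed.

Lemma snd_sum (I : Type) (r : seq I) (P : pred I) (F : I -> HGamb) :
  (\sum_(i <- r | P i) F i).2 = \sum_(i <- r | P i) (F i).2.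
Proof. by rewrite (big_morph snd (id1 := 0) (op1 := +%R)). Qed.

Definition avgA (g : gT) : CG := [ffun h => \sum_y ((h == (g ^ y)%g))%:R].
Definition avgB (s t : gT) : MG :=
  [ffun pq => iotp s t * \sum_y ((pq.1 == (s ^ y)%g) && (pq.2 == (t ^ y)%g))%:R].

Lemma classf_Eclass g : classf (Eclass C g).
Proof.
move=> h y; rewrite !ffunE; congr ((nat_of_bool _)%:R).
apply/idP/idP => /inclassP [z hz]; apply/inclassP; last by exists (z * y)%g; rewrite hz conjgM.
by exists (z * y^-1)%g; rewrite conjgM -hz conjgK.
Qed.

Lemma avgA_class g : avgA g = (avgA g g) *: Eclass C g.
Proof.
apply/ffunP => h; rewrite !ffunE.
case: (boolP (h \in _)) => [/inclassP [z ->]|H]; rewrite scE ?mulr1 ?mulr0.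
  rewrite (reindex_inj (mulIg z)) /=; apply: eq_bigr => y _.
  by rewrite conjgM (inj_eq (conjg_inj z)).
rewrite big1 // => y _; case: eqP => // hy; case/negP: H; apply/inclassP.
by exists y.
Qed.

Lemma decompA a : classf a -> a = \sum_g (a g / N) *: avgA g.
Proof.
move=> ca; apply/ffunP => h; rewrite sum_ffunE.
under eq_bigr do rewrite !ffunE scE mulr_sumr.
rewrite exchange_big /=.
under eq_bigr => y _.
  under eq_bigr => g _ do rewrite eq_sym eqJ mulrC mulrA.
  rewrite -big_distrl /= sum1l ca.
over.
rewrite /= sumr_const (_ : #|xpredT| = #|gT|) // -mulrnAr -(mulr_natr N^-1) mulVf ?Nneq0 ?mulr1 //.
Qed.


Lemma memA x : x \in HG_A C gT <-> x.2 = 0 /\ classf x.1.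
Proof.
split.
  move: x; apply: (@span_ind _ _ (fun x : HGamb => x.2 = 0 /\ classf x.1)).
  - by split=> // g y; rewrite !ffunE.
  - move=> u v [u2 cu] [v2 cv]; split; first by rewrite /= u2 v2 addr0.
    by move=> g y /=; rewrite !ffunE cu cv.
  - move=> k u [u2 cu]; split; first by rewrite /= u2 scaler0.
    by move=> g y /=; rewrite !ffunE cu.
  - move=> u /mapP [g _ ->]; split=> //; exact: classf_Eclass.
case: x => x1 x2 /= [-> cx].
have -> : (x1, 0) = \sum_g (x1 g / N) *: ((avgA g, 0) : HGamb).
  rewrite [RHS]surjective_pairing fst_sum snd_sum /=; congr pair.
    by rewrite {1}(decompA cx).
  by rewrite big1 // => g _; rewrite scaler0.
apply: memv_suml => g _; apply: memvZ.
have -> : ((avgA g, 0) : HGamb) = avgA g g *: ((Eclass C g, 0) : HGamb).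
  by rewrite {1}avgA_class pairZ scaler0.
apply: memvZ; apply: memv_span; apply/mapP; exists g => //.
by rewrite mem_enum.
Qed.

Lemma EpairJ (s t : gT) : invMx (Epair C s t).
Proof.
move=> p q y; rewrite !ffunE /=; congr ((nat_of_bool _)%:R).
apply/existsP/existsP => -[g /andP [/eqP hp /eqP hq]].
  exists (g * y^-1)%g; rewrite !conjgM -hp -hq !conjgK !eqxx //.
exists (g * y)%g; rewrite !conjgM hp hq !eqxx //.
Qed.

Lemma Epair_supp (s t : gT) : involutive_pair (s, t) -> suppm (Epair C s t).
Proof.
move=> ist p q; apply: contraNeq; rewrite ffunE /=.
case: existsP => [[g /andP [/eqP -> /eqP ->]]|] _; last by rewrite eqxx.
by rewrite invpJ.
Qed.

Lemma avgBJ (s t y : gT) : avgB (s ^ y)%g (t ^ y)%g = avgB s t.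
Proof.
apply/ffunP => pq; rewrite !ffunE iotaJ; congr (_ * _).
rewrite (reindex_inj (mulgI (y^-1)%g)) /=; apply: eq_bigr => z _.
by rewrite !conjgM !conjgK.
Qed.

Lemma avgB_pt (s t g : gT) : avgB s t ((s ^ g)%g, (t ^ g)%g) = avgB s t (s, t).
Proof.
rewrite !ffunE /= [in LHS](reindex_inj (mulIg g)); congr (_ * _).
by apply: eq_bigr => y _ /=; rewrite !conjgM !(inj_eq (conjg_inj g)).
Qed.

Lemma avgB_mem (s t : gT) : ((0, avgB s t) : HGamb) \in HG_B C gT.
Proof.
case: (boolP (involutive_pair (s, t))) => ist; last first.
  have -> : avgB s t = 0.
    by apply/ffunP => pq; rewrite !ffunE /iotp (negPf ist) mul0r.
  exact: mem0v.
have -> : ((0, avgB s t) : HGamb) = avgB s t (s, t) *: ((0, Epair C s t) : HGamb).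
  rewrite pairZ scaler0; congr pair; apply/ffunP => -[p q].
  rewrite [in RHS]ffunE scE [Epair _ _ _ _]ffunE /=.
  case: existsP => [[g /andP [/eqP -> /eqP ->]]|H]; first by rewrite mulr1 avgB_pt.
  rewrite mulr0 ffunE big1 ?mulr0 // => y _.
  case: andP => // -[/eqP hp /eqP hq]; case: H; exists y; by rewrite /= -hp -hq !eqxx.
apply: memvZ; apply: memv_span; apply/mapP; exists (s, t) => //.
by rewrite mem_enum.
Qed.

Lemma sum1r2 (T : finType) (a b : T) (F : T -> T -> C) :
  \sum_s \sum_t F s t * ((s == a) && (t == b))%:R = F a b.
Proof.
under eq_bigr => s _ do under eq_bigr => t _ do rewrite -mulnb natrM mulrA.
under eq_bigr => s _ do rewrite sum1r.
exact: sum1r.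
Qed.

Lemma decompB m : invMx m -> suppm m ->
  m = \sum_s \sum_t (m (s, t) / N) *: avgB s t.
Proof.
move=> im sm; apply/ffunP => -[p q]; rewrite sum_ffunE.
under eq_bigr do rewrite sum_ffunE.
under eq_bigr => s _ do under eq_bigr => t _ do
  rewrite sclE ffunE mulrCA !mulrA iota_supp // mulr_sumr.
rewrite exchange_big /=.
under eq_bigr => s _ do rewrite exchange_big /=.
rewrite exchange_big /=.
under eq_bigr => y _.
  under eq_bigr => s _ do under eq_bigr => t _ do
    rewrite [p == _]eq_sym [q == _]eq_sym !eqJ.
  rewrite exchange_big /= sum1r2 im.
over.
rewrite /= sumr_const (_ : #|xpredT| = #|gT|) // -mulrnAr -(mulr_natr N^-1) mulVf ?Nneq0 ?mulr1 //.
Qed.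

Lemma memB x : x \in HG_B C gT <-> [/\ x.1 = 0, invMx x.2 & suppm x.2].
Proof.
split.
  move: x; apply: (@span_ind _ _ (fun x : HGamb => [/\ x.1 = 0, invMx x.2 & suppm x.2])).
  - by split=> // [p q y|p q _]; rewrite !ffunE.
  - move=> u v [u1 iu su] [v1 iv sv]; split; first by rewrite /= u1 v1 addr0.
      by move=> p q y /=; rewrite !ffunE iu iv.
    by move=> p q H /=; rewrite !ffunE su ?sv ?addr0.
  - move=> k u [u1 iu su]; split; first by rewrite /= u1 scaler0.
      by move=> p q y /=; rewrite !ffunE iu.
    by move=> p q H /=; rewrite !ffunE su ?scaler0.
  - move=> u /mapP [[s t]]; rewrite mem_enum /= => ist ->; split=> //.
      exact: EpairJ.
    exact: Epair_supp.
case: x => x1 x2 /= [-> ix sx].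
have -> : (0, x2) = \sum_s \sum_t (x2 (s, t) / N) *: ((0, avgB s t) : HGamb).
  rewrite [RHS]surjective_pairing fst_sum snd_sum /=; congr pair.
    rewrite big1 // => s _; rewrite fst_sum big1 // => t _; by rewrite /= scaler0.
  rewrite {1}(decompB ix sx); apply: eq_bigr => s _.
  by rewrite snd_sum.
apply: memv_suml => s _; apply: memv_suml => t _; apply: memvZ; exact: avgB_mem.
Qed.

End HG3.

Section HG4.
Variables (C : numClosedFieldType) (gT : finGroupType).
Local Notation CG := (CG C gT).
Local Notation MG := (MG C gT).
Local Notation HGamb := (HGamb C gT).
Local Notation N := (#|gT|%:R : C).
Implicit Types (a b : CG) (m n : MG).

Lemma memH (x : HGamb) : x \in HG_H C gT <-> [/\ classf x.1, invMx x.2 & suppm x.2].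
Proof.
rewrite /HG_H; split.
  move=> /memv_addP [u /memA [u2 cu] [v /memB [v1 iv sv] ->]].
  split => /=; first by rewrite v1 addr0.
    by rewrite u2 add0r.
  by rewrite u2 add0r.
case: x => x1 x2 /= [cx ix sx].
have -> : ((x1, x2) : HGamb) = (x1, 0) + (0, x2) by rewrite pairD addr0 add0r.
by apply: memv_add; [apply/memA | apply/memB].
Qed.

Lemma conjJJ (p y g : gT) : ((p ^ y) ^ (g ^ y))%g = ((p ^ g) ^ y)%g.
Proof. by rewrite -!conjgM (conjgE g y) !mulgA mulgV mul1g. Qed.

Lemma classf_mul a b : classf a -> classf b -> classf (cg_mul a b).
Proof.
move=> ca cb g y; rewrite !ffunE (reindex_inj (conjg_inj y)) /=.
by apply: eq_bigr => h _; rewrite -conjVg -conjMg ca cb.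
Qed.

Lemma invm_mul m n : invMx m -> invMx n -> invMx (mg_mul m n).
Proof.
move=> im iN p q y; rewrite !ffunE /= (reindex_inj (conjg_inj y)) /=.
by apply: eq_bigr => h _; rewrite im iN.
Qed.

Lemma invpE (p q : gT) : involutive_pair (p, q) = ((p * p == 1)%g && (q * q == 1)%g).
Proof. by []. Qed.

Lemma invpJl (p q g : gT) : involutive_pair ((p ^ g)%g, q) = involutive_pair (p, q).
Proof. by rewrite !invpE -conjMg conjg_eq1. Qed.
Lemma invpJr (p q g : gT) : involutive_pair (p, (q ^ g)%g) = involutive_pair (p, q).
Proof. by rewrite !invpE -conjMg conjg_eq1. Qed.

Lemma suppm_mul m n : suppm m -> suppm n -> suppm (mg_mul m n).
Proof.
move=> sm sn p q; rewrite invpE negb_and => H; rewrite ffunE big1 // => h _ /=.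
case/orP: H => H.
  by rewrite sm ?mul0r // invpE negb_and H.
by rewrite sn ?mulr0 // invpE negb_and H orbT.
Qed.

Lemma invm_VL a n : classf a -> invMx n -> invMx (mg_mul (Vmap a) n).
Proof.
move=> ca iN p q y; rewrite VmapL !ffunE /= (reindex_inj (conjg_inj y)) /=.
by apply: eq_bigr => g _; rewrite ca conjJJ iN.
Qed.

Lemma invm_VR a n : classf a -> invMx n -> invMx (mg_mul n (Vmap a)).
Proof.
move=> ca iN p q y; rewrite VmapR !ffunE /= (reindex_inj (conjg_inj y)) /=.
by apply: eq_bigr => g _; rewrite ca -conjVg conjJJ iN.
Qed.

Lemma suppm_VL a n : suppm n -> suppm (mg_mul (Vmap a) n).
Proof.
move=> sn p q H; rewrite VmapL ffunE big1 // => g _ /=.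
by rewrite sn ?mulr0 // invpJl.
Qed.

Lemma suppm_VR a n : suppm n -> suppm (mg_mul n (Vmap a)).
Proof.
move=> sn p q H; rewrite VmapR ffunE big1 // => g _ /=.
by rewrite sn ?mulr0 // invpJr.
Qed.

Lemma invmD m n : invMx m -> invMx n -> invMx (m + n).
Proof. by move=> im iN p q y; rewrite !ffunE im iN. Qed.
Lemma suppmD m n : suppm m -> suppm n -> suppm (m + n).
Proof. by move=> sm sn p q H; rewrite !ffunE sm ?sn ?addr0. Qed.

Lemma mul_closed (x y : HGamb) : x \in HG_H C gT -> y \in HG_H C gT ->
  HG_mul x y \in HG_H C gT.
Proof.
case: x y => [x1 x2] [y1 y2] /memH [cx ix sx] /memH [cy iy sy].
apply/memH; split => /=.
- exact: classf_mul.
- apply: invmD; first apply: invmD.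
  + exact: invm_mul.
  + exact: invm_VL.
  + exact: invm_VR.
- apply: suppmD; first apply: suppmD.
  + exact: suppm_mul.
  + exact: suppm_VL.
  + exact: suppm_VR.
Qed.

Lemma mulA0 a b : HG_mul ((a, 0) : HGamb) (b, 0) = (cg_mul a b, 0).
Proof. by rewrite /HG_mul /= !mg_mul0l mg_mul0r !addr0. Qed.

Lemma mul0B m n : HG_mul ((0, m) : HGamb) (0, n) = (0, mg_mul m n).
Proof. by rewrite /HG_mul /= cg_mul0l Vmap0 mg_mul0l mg_mul0r !addr0. Qed.

Lemma mulAB a n : HG_mul ((a, 0) : HGamb) (0, n) = (0, mg_mul (Vmap a) n).
Proof. by rewrite /HG_mul /= cg_mul0r Vmap0 mg_mul0l mg_mul0r addr0 add0r. Qed.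

Lemma mulBA a n : HG_mul ((0, n) : HGamb) (a, 0) = (0, mg_mul n (Vmap a)).
Proof. by rewrite /HG_mul /= cg_mul0l Vmap0 !mg_mul0r !add0r. Qed.

Lemma classf_cent a b : classf a -> cg_mul a b = cg_mul b a.
Proof.
move=> ca; apply/ffunP => g; rewrite !ffunE.
rewrite (reindex_inj (mulgI g)) /= (reindex_inj invg_inj) /=.
apply: eq_bigr => h _.
rewrite invMg invgK -mulgA mulVg mulg1 mulrC; congr (_ * _).
by rewrite -[RHS](ca _ (h^-1)%g) conjgE invgK !mulgA mulgV mul1g.
Qed.

End HG4.

Section HG5.
Variables (C : numClosedFieldType) (gT : finGroupType).
Local Notation CG := (CG C gT).
Local Notation MG := (MG C gT).
Local Notation HGamb := (HGamb C gT).
Local Notation N := (#|gT|%:R : C).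
Local Notation avgA := (@avgA C gT).
Local Notation avgB := (@avgB C gT).
Local Notation iotp := (@iotp C gT).
Implicit Types (a b : CG) (m n : MG).

Lemma sumconst (F : C) : \sum_(y : gT) F = N * F.
Proof. by rewrite sumr_const (_ : #|xpredT| = #|gT|) // mulr_natl. Qed.

Lemma NK (F : C) : N^-1 * (N * F) = F.
Proof. by rewrite mulrA mulVf ?Nneq0 ?mul1r. Qed.

Lemma zeroCE (g : gT) : (0 : CG) g = 0. Proof. by rewrite ffunE. Qed.
Lemma zeroME pq : (0 : MG) pq = 0. Proof. by rewrite ffunE. Qed.
Lemma trm0 : trm 0 = 0 :> MG.
Proof. by apply/ffunP => pq; rewrite !ffunE. Qed.
Lemma inva0 : inva 0 = 0 :> CG.
Proof. by apply/ffunP => pq; rewrite !ffunE. Qed.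

Lemma HG_mul0l (y : HGamb) : HG_mul 0 y = 0.
Proof.
case: y => y1 y2; rewrite /HG_mul /= cg_mul0l Vmap0 !mg_mul0l !addr0.
by [].
Qed.

Lemma HG_mulZl c (x y : HGamb) : HG_mul (c *: x) y = c *: HG_mul x y.
Proof. by have := HG_mul_linl c x 0 y; rewrite !addr0 HG_mul0l addr0. Qed.

Lemma HG_form0l (y : HGamb) : HG_form 0 y = 0.
Proof. by rewrite /HG_form HG_mul0l HG_fE /= zeroCE /mtr big1 ?addr0 ?mul0r // => g _; rewrite zeroME. Qed.

Lemma HG_formZl c (x y : HGamb) : HG_form (c *: x) y = c * HG_form x y.
Proof. by have := HG_form_linl c x 0 y; rewrite !addr0 HG_form0l addr0. Qed.

Lemma HG_form_suml (I : finType) (F : I -> HGamb) y :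
  HG_form (\sum_i F i) y = \sum_i HG_form (F i) y.
Proof.
elim/big_rec2: _ => [|i y1 y2 _ <-]; first exact: HG_form0l.
by have := HG_form_linl 1 (F i) y2 y; rewrite scale1r mul1r.
Qed.

Lemma formBB m n : HG_form ((0, m) : HGamb) (0, n) = mtr (mg_mul m n) / N.
Proof. by rewrite /HG_form mul0B HG_fE /= zeroCE add0r. Qed.

Lemma formAB a n : HG_form ((a, 0) : HGamb) (0, n) = mtr (mg_mul (Vmap a) n) / N.
Proof. by rewrite /HG_form mulAB HG_fE /= zeroCE add0r. Qed.

Lemma formAA a b : HG_form ((a, 0) : HGamb) (b, 0) = (cg_mul a b) 1%g / N.
Proof.
rewrite /HG_form mulA0 HG_fE /= /mtr big1 ?addr0 // => g _; exact: zeroME.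
Qed.

Lemma classf_avgA (g : gT) : classf (avgA g).
Proof.
move=> h y; rewrite !ffunE (reindex_inj (mulIg y)) /=.
by apply: eq_bigr => z _; rewrite conjgM (inj_eq (conjg_inj y)).
Qed.

Lemma inva_avgA (g : gT) : inva (avgA (g^-1)%g) = avgA g.
Proof.
apply/ffunP => h; rewrite !ffunE; apply: eq_bigr => y _.
by rewrite conjVg (inj_eq invg_inj).
Qed.

Lemma formA_w a (g : gT) : classf a ->
  HG_form ((a, 0) : HGamb) (avgA (g^-1)%g, 0) = a g.
Proof.
move=> ca; rewrite formAA ffunE.
under eq_bigr do rewrite ffunE mulg1 mulr_sumr.
rewrite exchange_big /=.
under eq_bigr => y _.
  under eq_bigr => h _ do rewrite conjVg (inj_eq invg_inj).
  rewrite sum1r ca.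
over.
by rewrite sumconst mulrC mulrA mulVf ?Nneq0 ?mul1r.
Qed.

Definition uA (g : gT) : HGamb := N^-1 *: (avgA g, 0).
Definition wA (g : gT) : HGamb := (avgA (g^-1)%g, 0).

Lemma uA_mem g : uA g \in HG_A C gT.
Proof. apply: memvZ; apply/memA; split=> //; exact: classf_avgA. Qed.
Lemma wA_mem g : wA g \in HG_A C gT.
Proof. apply/memA; split=> //; exact: classf_avgA. Qed.

Lemma frameA (x : HGamb) : x \in HG_A C gT ->
  x = \sum_g HG_form x (wA g) *: uA g.
Proof.
case: x => x1 x2 /memA [/= -> cx].
under eq_bigr do rewrite formA_w // /uA scalerA.
rewrite [RHS]surjective_pairing fst_sum snd_sum /=; congr pair.
  by rewrite {1}(decompA cx); apply: eq_bigr => g _; rewrite mulrC.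
by rewrite big1 // => g _; rewrite scaler0.
Qed.

End HG5.

Section HG6.
Variables (C : numClosedFieldType) (gT : finGroupType).
Local Notation CG := (CG C gT).
Local Notation MG := (MG C gT).
Local Notation HGamb := (HGamb C gT).
Local Notation N := (#|gT|%:R : C).
Local Notation avgA := (@avgA C gT).
Local Notation avgB := (@avgB C gT).
Local Notation iotp := (@iotp C gT).
Implicit Types (a b : CG) (m n : MG).

Lemma avgB_mull (s t : gT) m : mg_mul (avgB s t) m =
  [ffun pq => iotp s t * \sum_y ((pq.1 == (s ^ y)%g)%:R * m ((t ^ y)%g, pq.2))].
Proof.
apply/ffunP => -[p q]; rewrite !ffunE /=.
under eq_bigr do rewrite ffunE /= -mulrA big_distrl /=.
rewrite -mulr_sumr; congr (_ * _); rewrite exchange_big /=; apply: eq_bigr => y _.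
under eq_bigr do rewrite -mulnb natrM -mulrA.
by rewrite -mulr_sumr sum1l.
Qed.

Lemma avgB_mulr (t s : gT) m : mg_mul m (avgB t s) =
  [ffun pq => iotp t s * \sum_z (m (pq.1, (t ^ z)%g) * (pq.2 == (s ^ z)%g)%:R)].
Proof.
apply/ffunP => -[p q]; rewrite !ffunE /=.
under eq_bigr do rewrite ffunE /= mulrCA big_distrr /=.
rewrite -mulr_sumr; congr (_ * _); rewrite exchange_big /=; apply: eq_bigr => z _.
under eq_bigr do rewrite -mulnb natrM mulrA.
by rewrite -big_distrl /= sum1r.
Qed.

Lemma mtr_avgB (s t : gT) m : invMx m ->
  mtr (mg_mul m (avgB t s)) = iotp t s * (N * m (s, t)).
Proof.
move=> im; rewrite /mtr avgB_mulr.
under eq_bigr do rewrite ffunE /=.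
rewrite -mulr_sumr; congr (_ * _); rewrite exchange_big /=.
under eq_bigr do rewrite sum1r im.
exact: sumconst.
Qed.

Lemma formB_w m (s t : gT) : invMx m -> suppm m ->
  HG_form ((0, m) : HGamb) (0, avgB t s) = m (s, t).
Proof.
move=> im sm; rewrite formBB mtr_avgB // iotaC mulrCA iota_supp //.
by rewrite mulrC NK.
Qed.

Definition uB (pq : gT * gT) : HGamb := N^-1 *: (0, avgB pq.1 pq.2).
Definition wB (pq : gT * gT) : HGamb := (0, avgB pq.2 pq.1).

Lemma uB_mem pq : uB pq \in HG_B C gT.
Proof. apply: memvZ; exact: avgB_mem. Qed.
Lemma wB_mem pq : wB pq \in HG_B C gT.
Proof. exact: avgB_mem. Qed.

Lemma frameB (x : HGamb) : x \in HG_B C gT ->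
  x = \sum_pq HG_form x (wB pq) *: uB pq.
Proof.
case: x => x1 x2 /memB [/= -> ix sx].
under eq_bigr do rewrite formB_w // /uB scalerA.
rewrite [RHS]surjective_pairing fst_sum snd_sum /=; congr pair.
  by rewrite big1 // => pq _; rewrite /= scaler0.
rewrite {1}(decompB ix sx) pair_big /=; apply: eq_bigr => -[s t] _ /=.
by [].
Qed.

End HG6.

Section HG7.
Variables (C : numClosedFieldType) (gT : finGroupType).
Local Notation CG := (CG C gT).
Local Notation MG := (MG C gT).
Local Notation HGamb := (HGamb C gT).
Local Notation N := (#|gT|%:R : C).
Local Notation avgA := (@avgA C gT).
Local Notation avgB := (@avgB C gT).
Local Notation iotp := (@iotp C gT).
Implicit Types (a b : CG) (m n : MG).

Lemma NK2 (X : C) : N * X / N = X.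
Proof. by rewrite mulrC mulrA mulVf ?Nneq0 ?mul1r. Qed.

Lemma eqVmul (x y z : gT) : (x == (y^-1 * z)%g) = ((y * x)%g == z).
Proof. by rewrite (canF_eq (mulKg y)). Qed.

Definition U1 : CG := [ffun h => \sum_g (((g * g)%g == h))%:R].

Definition Qc (h : gT) : C := \sum_a \sum_b ((a * a * (b * b))%g == h)%:R.

Lemma UU_pt h : (cg_mul U1 U1) h = Qc h.
Proof.
rewrite ffunE.
under eq_bigr do rewrite ffunE big_distrl /=.
rewrite exchange_big /=; apply: eq_bigr => a _.
under eq_bigr do rewrite eq_sym.
rewrite sum1l ffunE; apply: eq_bigr => b _.
by rewrite eqVmul mulgA.
Qed.

Lemma grp1 (g z : gT) : (g * z * (g * z) ^ z)%g = (g * g * (z * z))%g.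
Proof. by rewrite conjgE !mulgA mulgK. Qed.

Lemma avg_pt h : \sum_g N^-1 * (cg_mul (avgA g) (avgA g)) h = Qc h.
Proof.
have inner g : (cg_mul (avgA g) (avgA g)) h
    = \sum_y \sum_z ((((g ^ y) * (g ^ z))%g == h))%:R.
  rewrite ffunE.
  under eq_bigr do rewrite ffunE big_distrl /=.
  rewrite exchange_big /=; apply: eq_bigr => y _.
  rewrite sum1l ffunE; apply: eq_bigr => z _.
  by rewrite eq_sym eqVmul.
under eq_bigr do rewrite inner.
rewrite -mulr_sumr exchange_big /=.
have per y : \sum_g \sum_z ((((g ^ y) * (g ^ z))%g == h))%:R
    = \sum_g \sum_z (((g * (g ^ z))%g == h))%:R :> C.
  rewrite (reindex_inj (conjg_inj (y^-1)%g)) /=; apply: eq_bigr => g _.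
  rewrite (reindex_inj (mulgI y)) /=; apply: eq_bigr => z _.
  by rewrite conjgKV conjgM conjgKV.
under eq_bigr do rewrite per.
rewrite sumconst NK /Qc exchange_big /=.
rewrite [RHS]exchange_big /=; apply: eq_bigr => z _.
rewrite (reindex_inj (mulIg z)) /=; apply: eq_bigr => g _.
by rewrite grp1.
Qed.

End HG7.

Section HG8.
Variables (C : numClosedFieldType) (gT : finGroupType).
Local Notation CG := (CG C gT).
Local Notation MG := (MG C gT).
Local Notation HGamb := (HGamb C gT).
Local Notation N := (#|gT|%:R : C).
Local Notation avgA := (@avgA C gT).
Local Notation avgB := (@avgB C gT).
Local Notation iotp := (@iotp C gT).
Local Notation U1 := (@U1 C gT).
Implicit Types (a b : CG) (m n : MG).

Lemma classf_U1 : classf U1.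
Proof.
move=> h y; rewrite !ffunE (reindex_inj (conjg_inj y)) /=.
by apply: eq_bigr => g _; rewrite -conjMg (inj_eq (conjg_inj y)).
Qed.

Lemma eqmulV (k x h : gT) : ((k * x)%g == h) = (k == (h * x^-1)%g).
Proof. exact: (canF_eq (mulgK x)). Qed.

Lemma cgU a h : (cg_mul a U1) h = \sum_b a (h * (b * b)^-1)%g.
Proof.
rewrite ffunE.
under eq_bigr do rewrite ffunE mulr_sumr.
rewrite exchange_big /=; apply: eq_bigr => b _.
under eq_bigr do rewrite eqVmul eqmulV.
by rewrite sum1r.
Qed.

Lemma aswap a (x y : gT) : classf a -> a (x * y)%g = a (y * x)%g.
Proof. by move=> ca; rewrite -(ca (x * y)%g x) conjgE -mulgA mulKg. Qed.

Lemma U_sym a h : classf a ->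
  \sum_b a (h * (b * b)^-1)%g = \sum_b a (h^-1 * (b * b)^-1)%g.
Proof.
move=> ca.
transitivity (\sum_b a (b * h * b)%g).
  rewrite (reindex_inj invg_inj) /=; apply: eq_bigr => b _.
  by rewrite invMg !invgK mulgA aswap // mulgA.
transitivity (\sum_u a (h^-1 * (u * u))%g).
  rewrite (reindex_inj (mulIg (h^-1)%g)) /=; apply: eq_bigr => u _.
  by rewrite mulgKV mulgA aswap.
rewrite [RHS](reindex_inj invg_inj) /=; apply: eq_bigr => u _.
by rewrite invMg !invgK.
Qed.

Lemma U_star a : classf a -> inva (cg_mul a U1) = cg_mul a U1.
Proof. by move=> ca; apply/ffunP => h; rewrite [LHS]ffunE !cgU -U_sym. Qed.

End HG8.

Section HG9.
Variables (C : numClosedFieldType) (gT : finGroupType).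
Local Notation CG := (CG C gT).
Local Notation MG := (MG C gT).
Local Notation HGamb := (HGamb C gT).
Local Notation N := (#|gT|%:R : C).
Local Notation avgA := (@avgA C gT).
Local Notation avgB := (@avgB C gT).
Local Notation iotp := (@iotp C gT).
Implicit Types (a b : CG) (m n : MG).

Lemma trm_avgB (s t : gT) : trm (avgB t s) = avgB s t.
Proof.
apply/ffunP => -[p q]; rewrite !ffunE /= iotaC; congr (_ * _).
by apply: eq_bigr => y _; rewrite andbC.
Qed.

Lemma iota_idem (s t : gT) : iotp s t * iotp s t = iotp s t.
Proof. by rewrite /iotp; case: involutive_pair; rewrite ?mul1r ?mul0r. Qed.

Lemma iotaK (s t : gT) (X : C) : iotp s t * (iotp s t * X) = iotp s t * X.
Proof. by rewrite mulrA iota_idem. Qed.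

Lemma mtr_Al (s t : gT) m :
  mtr (mg_mul (avgB s t) m) = iotp s t * \sum_y m ((t ^ y)%g, (s ^ y)%g).
Proof.
rewrite /mtr avgB_mull.
under eq_bigr do rewrite ffunE /=.
rewrite -mulr_sumr; congr (_ * _); rewrite exchange_big /=; apply: eq_bigr => y _.
by rewrite sum1l.
Qed.

Lemma mtrAAB (s t : gT) B : invMx B ->
  mtr (mg_mul (mg_mul (avgB s t) (avgB s t)) B)
  = iotp s t * (N * \sum_k ((t == (s ^ k)%g)%:R * B ((t ^ k)%g, s))).
Proof.
move=> iB; rewrite -mg_mul_assoc mtr_Al.
under eq_bigr do rewrite avgB_mull ffunE /=.
rewrite -mulr_sumr iotaK; congr (_ * _).
have per y : \sum_z (((t ^ y)%g == (s ^ z)%g)%:R * B ((t ^ z)%g, (s ^ y)%g))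
    = \sum_k ((t == (s ^ k)%g)%:R * B ((t ^ k)%g, s)).
  rewrite (reindex_inj (mulIg y)) /=; apply: eq_bigr => k _.
  by rewrite !conjgM (inj_eq (conjg_inj y)) iB.
under eq_bigr do rewrite per.
exact: sumconst.
Qed.

Lemma mtrV (g : gT) B : invMx B ->
  mtr (mg_mul (Vmap (avgA g)) B) = N * \sum_p B ((p ^ g)%g, p).
Proof.
move=> iB; rewrite /mtr VmapL.
under eq_bigr do rewrite ffunE /=.
under eq_bigr do under eq_bigr do rewrite ffunE big_distrl /=.
under eq_bigr do rewrite exchange_big /=.
under eq_bigr do under eq_bigr do rewrite sum1l.
rewrite exchange_big /=.
have per y : \sum_p B (((p ^ (g ^ y))%g), p) = \sum_p B ((p ^ g)%g, p).
  rewrite (reindex_inj (conjg_inj y)) /=; apply: eq_bigr => p _.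
  by rewrite conjJJ iB.
under eq_bigr do rewrite per.
exact: sumconst.
Qed.

Lemma Yent m n (t s p q : gT) :
  (mg_mul m (mg_mul (avgB t s) n)) (p, q)
  = iotp t s * \sum_z m (p, (t ^ z)%g) * n ((s ^ z)%g, q).
Proof.
rewrite ffunE /=.
under eq_bigr do rewrite avgB_mull ffunE /= mulrCA.
under eq_bigr do rewrite mulr_sumr.
rewrite -mulr_sumr exchange_big /=; apply: congr1; apply: eq_bigr => z _.
under eq_bigr do rewrite mulrCA.
by rewrite sum1l.
Qed.

Lemma mtr4 (s t : gT) B1 B2 : invMx B1 -> invMx B2 ->
  mtr (mg_mul (mg_mul (mg_mul (avgB s t) B1) (avgB t s)) B2)
  = iotp s t * (N * \sum_k B1 (t, (t ^ k)%g) * B2 ((s ^ k)%g, s)).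
Proof.
move=> i1 i2; rewrite -!mg_mul_assoc mtr_Al.
under eq_bigr do rewrite Yent iotaC.
rewrite -mulr_sumr iotaK; congr (_ * _).
have per y : \sum_z B1 ((t ^ y)%g, (t ^ z)%g) * B2 ((s ^ z)%g, (s ^ y)%g)
    = \sum_k B1 (t, (t ^ k)%g) * B2 ((s ^ k)%g, s).
  rewrite (reindex_inj (mulIg y)) /=; apply: eq_bigr => k _.
  by rewrite !conjgM i1 i2.
under eq_bigr do rewrite per.
exact: sumconst.
Qed.

Lemma KB_sum B : suppm B ->
  \sum_s \sum_t iotp s t * \sum_k ((t == (s ^ k)%g)%:R * B ((t ^ k)%g, s))
  = \sum_p \sum_a B ((p ^ (a * a))%g, p).
Proof.
move=> sB; apply: eq_bigr => s _.
under eq_bigr do rewrite mulr_sumr.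
rewrite exchange_big /=; apply: eq_bigr => k _.
under eq_bigr do rewrite mulrCA.
rewrite sum1l conjgM (_ : iotp s (s ^ k)%g = iotp ((s ^ k) ^ k)%g s).
  by rewrite iota_supp.
by rewrite /iotp invpJr !invpJl.
Qed.

Lemma iota_drop B1 B2 (s t k : gT) : suppm B1 -> suppm B2 ->
  iotp s t * (B1 (t, (t ^ k)%g) * B2 ((s ^ k)%g, s)) = B1 (t, (t ^ k)%g) * B2 ((s ^ k)%g, s).
Proof.
move=> s1 s2; rewrite /iotp; case: (boolP (involutive_pair (s, t))) => H.
  by rewrite mul1r.
rewrite mul0r; move: H; rewrite invpE negb_and => /orP [H|H].
  by rewrite (s2 (s ^ k)%g s) ?mulr0 // invpJl invpE negb_and H.
by rewrite (s1 t (t ^ k)%g) ?mul0r // invpJr invpE negb_and H.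
Qed.

Lemma c4_sum B1 B2 : invMx B1 -> suppm B1 -> suppm B2 ->
  \sum_s \sum_t iotp s t * \sum_k B1 (t, (t ^ k)%g) * B2 ((s ^ k)%g, s)
  = \sum_g (\sum_p B1 ((p ^ g)%g, p)) * (\sum_q B2 ((q ^ (g^-1))%g, q)).
Proof.
move=> i1 s1 s2.
under eq_bigr do under eq_bigr do rewrite mulr_sumr.
under eq_bigr do under eq_bigr do under eq_bigr do rewrite iota_drop //.
transitivity (\sum_k (\sum_t B1 (t, (t ^ k)%g)) * (\sum_s B2 ((s ^ k)%g, s))).
  under [RHS]eq_bigr do rewrite big_distrlr /=.
  rewrite [LHS]exchange_big /=.
  under eq_bigr do rewrite exchange_big /=.
  by rewrite [LHS]exchange_big.
rewrite [RHS](reindex_inj invg_inj) /=; apply: eq_bigr => k _.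
rewrite invgK [X in _ = X * _](reindex_inj (conjg_inj k)) /=.
by under [X in _ = X * _]eq_bigr do rewrite conjgK.
Qed.

End HG9.

Section HG10.
Variables (C : numClosedFieldType) (gT : finGroupType).
Local Notation CG := (CG C gT).
Local Notation MG := (MG C gT).
Local Notation HGamb := (HGamb C gT).
Local Notation N := (#|gT|%:R : C).
Local Notation avgA := (@avgA C gT).
Local Notation avgB := (@avgB C gT).
Local Notation iotp := (@iotp C gT).
Local Notation U1 := (@U1 C gT).
Local Notation uA := (@uA C gT).
Local Notation wA := (@wA C gT).
Local Notation uB := (@uB C gT).
Local Notation wB := (@wB C gT).
Implicit Types (a b : CG) (m n : MG).

Lemma phi_star_l c (x y z : HGamb) :
  HG_mul (c *: x + y) (HG_star z) = c *: HG_mul x (HG_star z) + HG_mul y (HG_star z).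
Proof. exact: HG_mul_linl. Qed.
Lemma phi_star_r c (x y z : HGamb) :
  HG_mul z (HG_star (c *: x + y)) = c *: HG_mul z (HG_star x) + HG_mul z (HG_star y).
Proof. by rewrite HG_star_lin HG_mul_linr. Qed.

Lemma KstarA :
  Kstar (@HG_mul C gT) (@HG_form C gT) (@HG_star C gT) (HG_A C gT)
  = \sum_g HG_mul (uA g) (HG_star (wA g)).
Proof.
rewrite /Kstar /=.
apply: (frame_sum (phi := fun x y => HG_mul x (HG_star y))).
- exact: HG_form_linl.
- by move=> *; exact: HG_form_sym.
- exact: uA_mem.
- exact: wA_mem.
- exact: frameA.
- exact: phi_star_l.
- exact: phi_star_r.
Qed.

Lemma KstarB :
  Kstar (@HG_mul C gT) (@HG_form C gT) (@HG_star C gT) (HG_B C gT)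
  = \sum_pq HG_mul (uB pq) (HG_star (wB pq)).
Proof.
rewrite /Kstar /=.
apply: (frame_sum (phi := fun x y => HG_mul x (HG_star y))).
- exact: HG_form_linl.
- by move=> *; exact: HG_form_sym.
- exact: uB_mem.
- exact: wB_mem.
- exact: frameB.
- exact: phi_star_l.
- exact: phi_star_r.
Qed.

Lemma VKB (b1 : HGamb) :
  VK (@HG_mul C gT) (@HG_form C gT) (HG_B C gT) b1
  = \sum_pq HG_mul (HG_mul (uB pq) b1) (wB pq).
Proof.
rewrite /VK /=.
apply: (frame_sum (phi := fun x y => HG_mul (HG_mul x b1) y)).
- exact: HG_form_linl.
- by move=> *; exact: HG_form_sym.
- exact: uB_mem.
- exact: wB_mem.
- exact: frameB.
- by move=> c x y z; rewrite !HG_mul_linl.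
- by move=> c x y z; rewrite HG_mul_linr.
Qed.

Lemma c4R (b1 b2 : HGamb) :
  (let f := vbasis (HG_A C gT) in let F := invmx (gram_mx (@HG_form C gT) f) in
   \sum_(i < \dim (HG_A C gT)) \sum_(j < \dim (HG_A C gT))
      F i j * HG_form (tnth f i) b1 * HG_form (tnth f j) b2)
  = \sum_g HG_form (uA g) b1 * HG_form (wA g) b2.
Proof.
rewrite /=.
transitivity (\sum_(i < \dim (HG_A C gT)) \sum_(j < \dim (HG_A C gT))
   invmx (gram_mx (@HG_form C gT) (vbasis (HG_A C gT))) i j *:
   ((HG_form (tnth (vbasis (HG_A C gT)) i) b1 * HG_form (tnth (vbasis (HG_A C gT)) j) b2) : C^o)).
  by apply: eq_bigr => i _; apply: eq_bigr => j _; rewrite scE mulrA.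
apply: (frame_sum (W := C^o) (phi := fun x y => (HG_form x b1 * HG_form y b2 : C^o))).
- exact: HG_form_linl.
- by move=> *; exact: HG_form_sym.
- exact: uA_mem.
- exact: wA_mem.
- exact: frameA.
- by move=> c x y z; rewrite HG_form_linl scE; ring.
- by move=> c x y z; rewrite HG_form_linl scE; ring.
Qed.

End HG10.

Section HG11.
Variables (C : numClosedFieldType) (gT : finGroupType).
Local Notation CG := (CG C gT).
Local Notation MG := (MG C gT).
Local Notation HGamb := (HGamb C gT).
Local Notation N := (#|gT|%:R : C).
Local Notation avgA := (@avgA C gT).
Local Notation avgB := (@avgB C gT).
Local Notation iotp := (@iotp C gT).
Local Notation U1 := (@U1 C gT).
Local Notation uA := (@uA C gT).
Local Notation wA := (@wA C gT).
Local Notation uB := (@uB C gT).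
Local Notation wB := (@wB C gT).
Implicit Types (a b : CG) (m n : MG).

Lemma V_comm a n : invMx n -> mg_mul (Vmap a) n = mg_mul n (Vmap a).
Proof.
move=> iN; rewrite VmapL VmapR; apply/ffunP => -[p q]; rewrite !ffunE /=.
by apply: eq_bigr => g _; rewrite -(iN (p ^ g)%g q (g^-1)%g) conjgK.
Qed.

Definition d1 : CG := [ffun g => (g == 1%g)%:R].

Lemma classf_d1 : classf d1.
Proof. by move=> g y; rewrite !ffunE conjg_eq1. Qed.

Lemma Vmap_d1L m : mg_mul (Vmap d1) m = m.
Proof.
rewrite VmapL; apply/ffunP => -[p q]; rewrite ffunE /=.
under eq_bigr do rewrite ffunE.
by rewrite sum1l conjg1.
Qed.

Lemma Vmap_d1R m : mg_mul m (Vmap d1) = m.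
Proof.
rewrite VmapR; apply/ffunP => -[p q]; rewrite ffunE /=.
under eq_bigr do rewrite ffunE.
by rewrite sum1l invg1 conjg1.
Qed.

Lemma cg_d1L a : cg_mul d1 a = a.
Proof.
apply/ffunP => g; rewrite ffunE.
under eq_bigr do rewrite ffunE.
by rewrite sum1l invg1 mul1g.
Qed.

Lemma cg_d1R a : cg_mul a d1 = a.
Proof.
apply/ffunP => g; rewrite ffunE.
under eq_bigr do rewrite ffunE -eq_mulVg1.
by rewrite sum1r.
Qed.

Lemma unitL (x : HGamb) : HG_mul (d1, 0) x = x.
Proof.
case: x => x1 x2; rewrite /HG_mul /= cg_d1L Vmap_d1L !mg_mul0l add0r addr0.
by [].
Qed.

Lemma unitR (x : HGamb) : HG_mul x (d1, 0) = x.
Proof.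
case: x => x1 x2; rewrite /HG_mul /= cg_d1R Vmap_d1R !mg_mul0r add0r add0r.
by [].
Qed.

Definition EB : MG := [ffun pq => ((pq.1 == pq.2) && (pq.1 * pq.1 == 1)%g)%:R].

Lemma EB_mem : ((0, EB) : HGamb) \in HG_B C gT.
Proof.
apply/memB; split => //.
  move=> p q y; rewrite !ffunE /= (inj_eq (conjg_inj y)) -conjMg conjg_eq1 //.
move=> p q H; rewrite ffunE /=; case: (p =P q) => [pq|_] //; subst q.
by move: H; rewrite invpE andbb => /negPf ->.
Qed.

Lemma EB_L m : suppm m -> mg_mul EB m = m.
Proof.
move=> sm; apply/ffunP => -[p q]; rewrite ffunE /=.
under eq_bigr do rewrite ffunE /= andbC -mulnb natrM mulrAC [p == _]eq_sym.
rewrite sum1r; case: (boolP (p * p == 1)%g) => H; first by rewrite mul1r.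
by rewrite mul0r sm // invpE (negPf H).
Qed.

Lemma EB_R m : suppm m -> mg_mul m EB = m.
Proof.
move=> sm; apply/ffunP => -[p q]; rewrite ffunE /=.
under eq_bigr do rewrite ffunE /= -mulnb natrM mulrA mulrAC.
rewrite sum1r; case: (boolP (q * q == 1)%g) => H; first by rewrite mulr1.
by rewrite mulr0 sm // invpE (negPf H) andbF.
Qed.

Lemma trmK m : trm (trm m) = m.
Proof. by apply/ffunP => -[p q]; rewrite !ffunE. Qed.
Lemma invaK a : inva (inva a) = a.
Proof. by apply/ffunP => g; rewrite !ffunE invgK. Qed.

Lemma classf_inva a : classf a -> classf (inva a).
Proof. by move=> ca g y; rewrite !ffunE -conjVg ca. Qed.
Lemma invMx_trm m : invMx m -> invMx (trm m).
Proof. by move=> im p q y; rewrite !ffunE /= im. Qed.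
Lemma suppm_trm m : suppm m -> suppm (trm m).
Proof. by move=> sm p q H; rewrite ffunE /= sm // /involutive_pair /= andbC. Qed.

Lemma mtrVU m : mtr (mg_mul (Vmap U1) m) = \sum_p \sum_a m ((p ^ (a * a))%g, p).
Proof.
rewrite /mtr VmapL; apply: eq_bigr => p _; rewrite ffunE /=.
under eq_bigr do rewrite ffunE big_distrl /=.
rewrite exchange_big /=; apply: eq_bigr => a _.
under eq_bigr do rewrite eq_sym.
by rewrite sum1l.
Qed.

Lemma U_sq_lemma :
  HG_mul ((U1, 0) : HGamb) (U1, 0)
  = Kstar (@HG_mul C gT) (@HG_form C gT) (@HG_star C gT) (HG_A C gT).
Proof.
rewrite KstarA mulA0.
have term g : HG_mul (uA g) (HG_star (wA g))
    = N^-1 *: ((cg_mul (avgA g) (avgA g), 0) : HGamb).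
  by rewrite /uA /wA HG_starE /= inva_avgA trm0 HG_mulZl mulA0.
under eq_bigr do rewrite term.
rewrite [RHS]surjective_pairing fst_sum snd_sum /=; congr pair.
  apply/ffunP => h; rewrite sum_ffunE UU_pt -avg_pt; apply: eq_bigr => g _.
  by rewrite sclcE.
by rewrite big1 // => g _; rewrite /= scaler0.
Qed.

Lemma U_form_lemma (b : HGamb) : b \in HG_B C gT ->
  HG_form ((U1, 0) : HGamb) b
  = HG_form (Kstar (@HG_mul C gT) (@HG_form C gT) (@HG_star C gT) (HG_B C gT)) b.
Proof.
case: b => b1 b2 /memB [/= -> ib sb].
rewrite KstarB HG_form_suml formAB mtrVU.
have term (pq : gT * gT) : HG_form (HG_mul (uB pq) (HG_star (wB pq))) (0, b2)
   = N^-1 * (iotp pq.1 pq.2 *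
       \sum_k ((pq.2 == (pq.1 ^ k)%g)%:R * b2 ((pq.2 ^ k)%g, pq.1))).
  by rewrite /uB /wB HG_starE /= inva0 trm_avgB HG_mulZl mul0B HG_formZl formBB
    mtrAAB // (mulrCA (iotp _ _) N) NK2.
rewrite (eq_bigr _ (fun pq _ => term pq)).
by rewrite -mulr_sumr -(KB_sum sb) pair_big /= mulrC.
Qed.

Lemma cond4_lemma (b1 b2 : HGamb) : b1 \in HG_B C gT -> b2 \in HG_B C gT ->
  HG_form (VK (@HG_mul C gT) (@HG_form C gT) (HG_B C gT) b1) b2 =
      (let f := vbasis (HG_A C gT) in let F := invmx (gram_mx (@HG_form C gT) f) in
       \sum_(i < \dim (HG_A C gT)) \sum_(j < \dim (HG_A C gT))
          F i j * HG_form (tnth f i) b1 * HG_form (tnth f j) b2).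
Proof.
case: b1 b2 => [x1 B1] [x2 B2] /memB [/= -> i1 s1] /memB [/= -> i2 s2].
have := c4R (0, B1) (0, B2); rewrite /= => ->; rewrite VKB HG_form_suml.
have tl (pq : gT * gT) :
    HG_form (HG_mul (HG_mul (uB pq) (0, B1)) (wB pq)) (0, B2)
    = N^-1 * (iotp pq.1 pq.2 *
        \sum_k B1 (pq.2, (pq.2 ^ k)%g) * B2 ((pq.1 ^ k)%g, pq.1)).
  by rewrite /uB /wB !HG_mulZl !mul0B HG_formZl formBB mtr4 // (mulrCA (iotp _ _) N) NK2.
have tr (g : gT) : HG_form (uA g) (0, B1) * HG_form (wA g) (0, B2)
    = N^-1 * ((\sum_p B1 ((p ^ g)%g, p)) * (\sum_q B2 ((q ^ (g^-1))%g, q))).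
  by rewrite /uA /wA HG_formZl !formAB !mtrV // !NK2 mulrA.
rewrite (eq_bigr _ (fun pq _ => tl pq)).
rewrite [RHS](eq_bigr _ (fun g _ => tr g)).
by rewrite -!mulr_sumr -(c4_sum i1 s1 s2) pair_big.
Qed.

End HG11.

Theorem theorem2p2 (C : numClosedFieldType) (gT : finGroupType) :
  exists U : HGamb C gT,
    structure_algebra (@HG_mul C gT) (HG_H C gT) (HG_A C gT) (HG_B C gT)
      (@HG_form C gT) (@HG_star C gT) U.
Proof.
exists (U1 C gT, 0); split.
- split => //; apply/directv_addP/vspaceP => x; rewrite memv_cap memv0.
  apply/andP/eqP => [[/memA [x2 _] /memB [x1 _ _]]|->]; last by rewrite !mem0v.
  by case: x x1 x2 => ? ? /= -> ->.
- exact: mul_closed.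
- by move=> *; exact: HG_mul_linl.
- by move=> *; exact: HG_mul_linr.
- by move=> *; exact: HG_mul_assoc.
- move=> [x1 x2] [y1 y2] /memA [/= -> cx] /memA [/= -> cy].
  rewrite mulA0; apply/memA; split => //; exact: classf_mul.
- move=> [a1 a2] [x1 x2] /memA [/= -> ca] /memH [/= cx ix sx].
  rewrite /HG_mul /=; congr pair; first exact: classf_cent.
  by rewrite !mg_mul0l !mg_mul0r !add0r addr0 V_comm.
- exists (d1 C gT, 0); first by apply/memA; split => //; exact: classf_d1.
  by move=> x _; split; [exact: unitL | exact: unitR].
- move=> [b1 b2] [x1 x2] /memB [/= -> ib sb] /memH [/= cx ix sx]; split; apply/memB.
  + rewrite /HG_mul /= cg_mul0r Vmap0 mg_mul0r addr0; split => //.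
      by apply: invmD; [exact: invm_mul | exact: invm_VL].
    by apply: suppmD; [exact: suppm_mul | exact: suppm_VL].
  + rewrite /HG_mul /= cg_mul0l Vmap0 mg_mul0l addr0; split => //.
      by apply: invmD; [exact: invm_mul | exact: invm_VR].
    by apply: suppmD; [exact: suppm_mul | exact: suppm_VR].
- exists (0, EB C gT); first exact: EB_mem.
  move=> [b1 b2] /memB [/= -> ib sb].
  by rewrite !mul0B EB_L ?EB_R.
- by move=> *; exact: HG_form_linl.
- by move=> *; exact: HG_form_sym.
- by move=> *; exact: HG_form_inv.
- move=> [a1 a2] /memA [/= -> ca] H.
  suff -> : a1 = 0 by [].
  apply/ffunP => g; rewrite ffunE -(formA_w g ca); apply: H; exact: wA_mem.
- move=> [b1 b2] /memB [/= -> ib sb] H.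
  suff -> : b2 = 0 by [].
  apply/ffunP => -[s t]; rewrite ffunE -(formB_w s t ib sb); apply: H.
  exact: avgB_mem.
- move=> [x1 x2] /memH [/= cx ix sx]; apply/memH; rewrite HG_starE /=; split.
  + exact: classf_inva.
  + exact: invMx_trm.
  + exact: suppm_trm.
- by move=> *; exact: HG_star_lin.
- by move=> *; exact: HG_star_anti.
- by move=> *; exact: HG_star_invol.
- exact: cond4_lemma.
- move=> [x1 x2] /memH [/= cx ix sx]; rewrite HG_starE /=.
  apply/idP/idP => /memA [/= h2 _]; apply/memA; split => //.
  + by rewrite -(trmK x2) h2 trm0.
  + by rewrite h2 trm0.
  + exact: classf_inva.
- move=> [x1 x2] /memH [/= cx ix sx]; rewrite HG_starE /=.
  apply/idP/idP => /memB [/= h1 _ _]; apply/memB; split => //.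
  + by rewrite -(invaK x1) h1 inva0.
  + by rewrite h1 inva0.
  + exact: invMx_trm.
  + exact: suppm_trm.
- by move=> *; exact: HG_form_star.
- by apply/memA; split => //; exact: classf_U1.
- exact: U_sq_lemma.
- exact: U_form_lemma.
- move=> [a1 a2] /memA [/= -> ca].
  by rewrite mulA0 HG_starE /= U_star // trm0.
Qed.
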